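(* Let $d\ge2$ and $\gamma\ge2d$. The set $$\mathcal V=\{v\in\mathcal R^{(\gamma)}_\infty: v+w\notin\mathcal R^{(\gamma)}_\infty\text{ for every nonzero } w\in f^{(d,\gamma)}\cdot\ell^\infty(\mathbb Z^d,\mathbb Z)\}$$ is a dense $G_\delta$ subset of $\mathcal R^{(\gamma)}_\infty$ (in the product topology).
   Context: $f^{(d,\gamma)}=\gamma-\sum_{i=1}^d(u_i+u_i^{-1})$, acting on $h\in\ell^\infty(\mathbb Z^d,\mathbb Z)$ by $(f^{(d,\gamma)}\cdot h)_{\mathbf n}=\gamma h_{\mathbf n}-\sum_i(h_{\mathbf n+\mathbf e^{(i)}}+h_{\mathbf n-\mathbf e^{(i)}})$. For nonempty $F\subset\mathbb Z^d$, $\mathsf N_F(\mathbf n)=|F\cap\{\mathbf n\pm\mathbf e^{(i)}\}|$. $\mathcal R^{(\gamma)}_\infty=\{v\in\{0,\dots,\gamma-1\}^{\mathbb Z^d}:$ for every finite nonempty $F\subset\mathbb Z^d$ there is $\mathbf n\in F$ with $v_{\mathbf n}\ge\mathsf N_F(\mathbf n)\}$. *)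

(* Defs.v *)
From HB Require Import structures.
From mathcomp Require Import all_boot all_order all_algebra.
Set Implicit Arguments. Unset Strict Implicit. Unset Printing Implicit Defensive.
Import Order.TTheory GRing.Theory Num.Theory.
Local Open Scope ring_scope.

Definition point (d : nat) := {ffun 'I_d -> int}.

Definition padd d (n m : point d) : point d := [ffun j => n j + m j].
Definition psub d (n m : point d) : point d := [ffun j => n j - m j].
Definition unitv d (i : 'I_d) : point d := [ffun j => ((i == j) : nat)%:Z].

Definition config (d : nat) := point d -> int.

Definition nbrs d (n : point d) : seq (point d) :=
  flatten [seq [:: padd n (unitv i); psub n (unitv i)] | i <- enum 'I_d].

Definition NF d (F : seq (point d)) (n : point d) : nat :=
  count (fun m => m \in F) (nbrs n).

Definition Rinf (d gamma : nat) (v : config d) : Prop :=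
  (forall n, 0 <= v n /\ v n < gamma%:Z) /\
  (forall F : seq (point d), F <> [::] ->
     exists2 n, n \in F & (NF F n)%:Z <= v n).

Arguments Rinf : clear implicits.

Definition bounded d (h : config d) : Prop :=
  exists B : int, forall n, `|h n| <= B.

Definition fact_f (d gamma : nat) (h : config d) : config d :=
  fun n => gamma%:Z * h n
           - \sum_(i < d) (h (padd n (unitv i)) + h (psub n (unitv i))).

Arguments fact_f : clear implicits.

Definition cadd d (v w : config d) : config d := fun n => v n + w n.

Definition Vset (d gamma : nat) (v : config d) : Prop :=
  Rinf d gamma v /\
  forall h : config d, bounded h -> (exists n, fact_f d gamma h n != 0) ->
    ~ Rinf d gamma (cadd v (fact_f d gamma h)).

Arguments Vset : clear implicits.

(* Product topology (subspace topology on S): basic open sets are cylinders *)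
Definition agree_on d (F : seq (point d)) (x y : config d) : Prop :=
  forall p, p \in F -> y p = x p.

Definition open_in d (S U : config d -> Prop) : Prop :=
  forall x, S x -> U x ->
    exists F : seq (point d), forall y, S y -> agree_on F x y -> U y.

Definition dense_in d (S A : config d -> Prop) : Prop :=
  forall U, open_in S U -> (exists x, S x /\ U x) ->
    exists y, [/\ S y, U y & A y].

Definition Gdelta_in d (S A : config d -> Prop) : Prop :=
  exists U : nat -> config d -> Prop,
    (forall k, open_in S (U k)) /\
    (forall x, S x -> (A x <-> forall k, U k x)).

(* Main.v *)
From Stdlib Require Import ZArith Lia Classical IndefiniteDescription.
Require Import Defs.
From HB Require Import structures.
From mathcomp Require Import all_boot all_order all_algebra.
Set Implicit Arguments. Unset Strict Implicit. Unset Printing Implicit Defensive.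
Import Order.TTheory GRing.Theory Num.Theory.

Set Implicit Arguments. Unset Strict Implicit. Unset Printing Implicit Defensive.
Import Order.TTheory GRing.Theory Num.Theory.

Definition zof (a : int) : Z :=
  match a with Posz n => Z.of_nat n | Negz n => Z.sub (Z.opp (Z.of_nat n)) 1 end.

Lemma natE_all : (forall m n, (m + n)%N = Nat.add m n) /\ (forall m n, (m - n)%N = Nat.sub m n)
  /\ (forall m n, (m * n)%N = Nat.mul m n).
Proof. by []. Qed.

Ltac natlia := rewrite -?plusE -?multE -?minusE; lia.

Lemma zofD a b : zof (a + b)%R = Z.add (zof a) (zof b).
Proof.
rewrite -[(a + b)%R]/(intZmod.addz a b).
case: a => m; case: b => n /=.
- rewrite /= ?(proj1 natE_all); lia.
- case: ifP => H /=.
  + move/ssrnat.leP: H => H; rewrite ?(proj1 natE_all) ?(proj1 (proj2 natE_all)); lia.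
  + move/negbT: H; rewrite -leqNgt => /ssrnat.leP H; rewrite ?(proj1 natE_all) ?(proj1 (proj2 natE_all)); lia.
- case: ifP => H /=.
  + move/ssrnat.leP: H => H; rewrite ?(proj1 natE_all) ?(proj1 (proj2 natE_all)); lia.
  + move/negbT: H; rewrite -leqNgt => /ssrnat.leP H; rewrite ?(proj1 natE_all) ?(proj1 (proj2 natE_all)); lia.
- rewrite ?(proj1 natE_all); lia.
Qed.

Lemma zofN a : zof (- a)%R = Z.opp (zof a).
Proof.
rewrite -[(- a)%R]/(intZmod.oppz a).
case: a => [[|n]|n] /=; lia.
Qed.

Lemma zofB a b : zof (a - b)%R = Z.sub (zof a) (zof b).
Proof. by rewrite zofD zofN; lia. Qed.

Lemma zofM a b : zof (a * b)%R = Z.mul (zof a) (zof b).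
Proof.
rewrite -[(a * b)%R]/(intRing.mulz a b).
case: a => m; case: b => n /=; rewrite ?zofN /= ?(proj2 (proj2 natE_all)); lia.
Qed.

Lemma zofMn a n : zof (a *+ n)%R = Z.mul (zof a) (Z.of_nat n).
Proof. elim: n => [|n IH]; first by rewrite mulr0n /=; lia. by rewrite mulrS zofD IH; lia. Qed.

Lemma zofNorm (a : int) : zof (`|a|)%R = Z.abs (zof a).
Proof. by rewrite -abszE; case: a => n /=; lia. Qed.

Lemma zofNeg (n : nat) : zof (Negz n) = Z.sub (Z.opp (Z.of_nat n)) 1.
Proof. by []. Qed.

Lemma zofn (n : nat) : zof (n%:Z) = Z.of_nat n. Proof. by []. Qed.
Lemma zofnR (n : nat) : zof (n%:R) = Z.of_nat n. Proof. by rewrite natz. Qed.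
Lemma zof0 : zof 0 = Z0. Proof. by []. Qed.
Lemma zof1 : zof 1 = Zpos xH. Proof. by []. Qed.

Lemma zle a b : (a <= b)%R = Z.leb (zof a) (zof b).
Proof.
rewrite -[(a <= b)%R]/(intOrdered.lez a b).
case: a => m; case: b => n /=; apply/idP/idP => H;
  try (move/ssrnat.leP: H => H); try (move/Z.leb_le: H => H);
  first [done | apply/Z.leb_le; lia | apply/ssrnat.leP; lia | lia].
Qed.

Lemma zlt a b : (a < b)%R = Z.ltb (zof a) (zof b).
Proof.
rewrite -[(a < b)%R]/(intOrdered.ltz a b).
case: a => m; case: b => n /=; apply/idP/idP => H;
  try (move/ssrnat.ltP: H => H); try (move/Z.ltb_lt: H => H);
  first [done | apply/Z.ltb_lt; lia | apply/ssrnat.ltP; lia | lia].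
Qed.

Lemma zeq a b : (a = b) <-> (zof a = zof b).
Proof. split=> [->//|]. case: a => m; case: b => n /= H; first [congr Posz; lia | congr Negz; lia | lia]. Qed.

Lemma zofA (a : int) : Z.of_nat (absz a) = Z.abs (zof a).
Proof. case: a => n /=; lia. Qed.

Ltac zrw := repeat progress rewrite ?Nat2Z.inj_succ ?Nat2Z.inj_add ?Nat2Z.inj_mul ?zofD ?zofN ?zofM ?zofMn ?zofNorm ?zofNeg ?zofn ?zofnR ?zof0 ?zof1 ?zofA -?plusE -?multE -?minusE.
Ltac zr H := revert H; zrw; intro H.
Ltac znat := repeat match goal with
 | H : context [addn _ _] |- _ => rewrite -plusE in H
 | H : context [muln _ _] |- _ => rewrite -multE in H
 | H : context [subn _ _] |- _ => rewrite -minusE in H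
 end.
Ltac zconv := znat; repeat match goal with
 | H : is_true (@Order.le _ _ _ _) |- _ => rewrite zle in H; move/Z.leb_le in H; zr H
 | H : is_true (@Order.lt _ _ _ _) |- _ => rewrite zlt in H; move/Z.ltb_lt in H; zr H
 | H : @eq _ ?a ?b |- _ => let H' := fresh in have H' := proj1 (zeq a b) H; clear H; zr H'
 | H : is_true (leq _ _) |- _ => move/ssrnat.leP in H; apply Nat2Z.inj_le in H; zr H
 | H : ~ (@eq _ ?a ?b) |- _ => let H' := fresh in
     have H' : zof a <> zof b := (fun E => H (proj2 (zeq a b) E)); clear H; zr H'
 | H : is_true (~~ (@eq_op _ ?a ?b)) |- _ => let H' := fresh in
     have H' : zof a <> zof b := (fun E => (negP H) (introT eqP (proj2 (zeq a b) E))); clear H; zr H'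
 end;
 try match goal with
 | |- is_true (@Order.le _ _ _ _) => rewrite zle; apply/Z.leb_le
 | |- is_true (@Order.lt _ _ _ _) => rewrite zlt; apply/Z.ltb_lt
 | |- @eq _ ?a ?b => apply (proj2 (zeq a b))
 | |- is_true (leq _ _) => apply/ssrnat.leP; apply Nat2Z.inj_le
 | |- @eq nat _ _ => apply Nat2Z.inj
 end;
 zrw.
Ltac zlia := zconv; lia.
Ltac znia := zconv; nia.

Local Open Scope ring_scope.

Section Basic.
Variable d : nat.
Implicit Types (n m p q r : point d) (h : config d) (i j : 'I_d).

Lemma paddE n m j : padd n m j = n j + m j. Proof. by rewrite ffunE. Qed.
Lemma psubE n m j : psub n m j = n j - m j. Proof. by rewrite ffunE. Qed.
Lemma unitvE i j : unitv i j = ((i == j) : nat)%:Z. Proof. by rewrite ffunE. Qed.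

Lemma psub_padd n i : psub (padd n (unitv i)) (unitv i) = n.
Proof. by apply/ffunP=> j; rewrite psubE paddE addrK. Qed.
Lemma padd_psub n i : padd (psub n (unitv i)) (unitv i) = n.
Proof. by apply/ffunP=> j; rewrite paddE psubE subrK. Qed.

Lemma mem_nbrs r n : (r \in nbrs n) = [exists i, (r == padd n (unitv i)) || (r == psub n (unitv i))].
Proof.
apply/idP/existsP.
- case/flattenP=> s /mapP[i _ ->]; rewrite !inE => H; by exists i.
- case=> i H; apply/flattenP; exists [:: padd n (unitv i); psub n (unitv i)].
    by apply/mapP; exists i; rewrite ?mem_enum.
  by rewrite !inE.
Qed.

Lemma nbrs_padd n i : padd n (unitv i) \in nbrs n.
Proof. by rewrite mem_nbrs; apply/existsP; exists i; rewrite eqxx. Qed.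
Lemma nbrs_psub n i : psub n (unitv i) \in nbrs n.
Proof. by rewrite mem_nbrs; apply/existsP; exists i; rewrite eqxx orbT. Qed.

Lemma nbr_sym r n : r \in nbrs n -> n \in nbrs r.
Proof.
rewrite mem_nbrs => /existsP[i /orP[]/eqP->].
- by rewrite -{1}(psub_padd n i) nbrs_psub.
- by rewrite -{1}(padd_psub n i) nbrs_padd.
Qed.

Lemma size_flat2 (T : Type) (s : seq 'I_d) (a b : 'I_d -> T) :
  size (flatten [seq [:: a i; b i] | i <- s]) = (2 * size s)%N.
Proof. elim: s => //= x s IH; rewrite IH mulnS. by []. Qed.

Lemma size_nbrs n : size (nbrs n) = (2 * d)%N.
Proof. by rewrite /nbrs size_flat2 size_enum_ord. Qed.

Lemma sum_nbrs n (F : point d -> int) :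
  \sum_(r <- nbrs n) F r = \sum_(i < d) (F (padd n (unitv i)) + F (psub n (unitv i))).
Proof.
rewrite /nbrs big_flatten /= big_map big_enum /=.
by apply: eq_bigr => i _; rewrite !big_cons big_nil addr0.
Qed.

End Basic.

Section Level.
Variables (d gamma : nat).
Implicit Types (n m p q r : point d) (h : config d) (i j : 'I_d).

Definition NP (P : pred (point d)) n := count P (nbrs n).

Lemma sum_le (s : seq (point d)) h M : (forall q, h q <= M) ->
  \sum_(q <- s) h q + (count (fun q => h q != M) s)%:Z <= (size s)%:Z * M.
Proof.
move=> hM; elim: s => [|x s IH]; first by rewrite big_nil /= mul0r addr0.
rewrite big_cons /=; set S := \sum_(q <- s) h q in IH *; have := hM x; case: eqP => E H /=.
- znia.
- znia.
Qed.

Lemma fact_f_ge h M n : (forall q, h q <= M) ->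
  (gamma%:Z - (2 * d)%N%:Z) * M + (count (fun q => h q != M) (nbrs n))%:Z <= fact_f d gamma h n + (gamma%:Z * (M - h n)).
Proof.
move=> hM; rewrite /fact_f -sum_nbrs.
have := sum_le (nbrs n) hM; rewrite size_nbrs => H.
set S := \sum_(r <- nbrs n) h r in H *.
znia.
Qed.

Lemma cnt_split (P : pred (point d)) s : (count P s + count (fun q => ~~ P q) s = size s)%N.
Proof. exact: count_predC. Qed.

Lemma fact_f_neg h n : fact_f d gamma (fun p => - h p) n = - fact_f d gamma h n.
Proof.
rewrite /fact_f (eq_bigr (fun i => - (h (padd n (unitv i)) + h (psub n (unitv i))))).
  by rewrite sumrN mulrN opprB opprK addrC.
by move=> i _; rewrite opprD.
Qed.

Lemma fact_f_const h c n : (forall p, h p = c) -> fact_f d gamma h n = (gamma%:Z - (2 * d)%N%:Z) * c.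
Proof.
move=> hc; rewrite /fact_f (eq_bigr (fun i => c + c)); last by move=> i _; rewrite !hc.
rewrite sumr_const card_ord hc. znia.
Qed.

Lemma level_max (y y' : config d) h M :
  Rinf d gamma y -> (forall n, y' n = y n + fact_f d gamma h n) -> (forall n, y' n < gamma%:Z) ->
  (forall p, h p <= M) -> (exists p, h p = M) ->
  0 <= (gamma%:Z - (2 * d)%N%:Z) * (M - 1) ->
  (forall n, h n = M -> y n + 1 <= (NP (fun q => h q == M) n)%:Z) /\
  (forall K : seq (point d), ~ (forall q, h q = M -> q \in K)).
Proof.
move=> Ry Hy' Hlt hM [p0 hp0] Hpos.
have part1 : forall n, h n = M -> y n + 1 <= (NP (fun q => h q == M) n)%:Z.
  move=> n hn; have G := fact_f_ge n hM; rewrite hn subrr mulr0 addr0 in G.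
  have C := cnt_split (fun q => h q == M) (nbrs n); rewrite size_nbrs in C.
  have := Hlt n; rewrite Hy' => L.
  rewrite /NP; move: G C L Hpos.
  set c1 := count _ _; set c2 := count _ _; set F := fact_f _ _ _ _.
  clearbody c1 c2 F; move=> G C L Hpos. znia.
split=> // K hK.
set L := [seq q <- K | h q == M].
have L0 : L != [::] by apply/eqP => E; have := mem_filter (fun q => h q == M) p0 K;
  rewrite -/L E in_nil hp0 eqxx (hK _ hp0).
case: Ry => _ /(_ L) []; first by apply/eqP.
move=> n; rewrite mem_filter => /andP[/eqP hn _].
have -> : NF L n = NP (fun q => h q == M) n.
  rewrite /NF /NP; apply: eq_count => q; rewrite mem_filter.
  by case E: (h q == M) => //=; apply: hK; apply/eqP.
move=> H; have H2 := part1 n hn. zlia.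
Qed.

End Level.

Set Implicit Arguments. Unset Strict Implicit. Unset Printing Implicit Defensive.
Import Order.TTheory GRing.Theory Num.Theory.
Local Open Scope ring_scope.

Lemma disc (Q : nat -> Prop) N : Q 0%N -> ~ Q N -> exists k, Q k /\ ~ Q k.+1.
Proof.
move=> Q0; elim: N => [//|N IH] HN.
case: (classic (Q N)) => H; first by exists N.
exact: IH.
Qed.

Section Crit.
Variables (d gamma : nat).
Implicit Types (n m p q r : point d) (h : config d) (i j : 'I_d).

Lemma bmax h : bounded h -> exists M, (forall p, h p <= M) /\ exists p, h p = M.
Proof.
case=> B HB.
have [N HN] : exists N : nat, forall p, `|h p| <= N%:Z.
  by exists (absz B) => p; have H := HB p; zlia.
pose Q k := exists p, k%:Z - N%:Z <= h p.
have Q0 : Q 0%N by exists [ffun _ => 0]; have H := HN [ffun _ => 0]; zlia.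
have QN : ~ Q (2 * N).+1.
  by case=> p Hp; have H := HN p; zlia.
case: (disc Q0 QN) => k [[p Hp] Hk].
exists (k%:Z - N%:Z); split; last first.
  exists p; apply/eqP; rewrite eq_le Hp andbT; case: (lerP (h p) (k%:Z - N%:Z)) => // H.
  by case: Hk; exists p; zlia.
move=> q; case: (lerP (h q) (k%:Z - N%:Z)) => // H.
by case: Hk; exists q; zlia.
Qed.

Lemma bmin h : bounded h -> exists c, (forall p, c <= h p) /\ exists p, h p = c.
Proof.
move=> [B HB]; case: (@bmax (fun p => - h p)).
  by exists B => p; rewrite normrN.
move=> M [H1 [p H2]]; exists (- M); split.
  by move=> q; have H := H1 q; zlia.
by exists p; rewrite -H2 opprK.
Qed.

End Crit.
Section Crit2.
Variables (d gamma : nat).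
Implicit Types (n p q r : point d) (h : config d) (i j : 'I_d).

Lemma level_min (y y' : config d) h c :
  Rinf d gamma y' -> (forall n, y' n = y n + fact_f d gamma h n) -> (forall n, y n < gamma%:Z) ->
  (forall p, c <= h p) -> (exists p, h p = c) ->
  0 <= (gamma%:Z - (2 * d)%N%:Z) * (- c - 1) ->
  (forall n, h n = c -> gamma%:Z <= y n + (NP (fun q => h q == c) n)%:Z) /\
  (forall K : seq (point d), ~ (forall q, h q = c -> q \in K)).
Proof.
move=> Ry' Hy' Hlt hc [p0 hp0] Hpos.
have hM : forall p, (fun p => - h p) p <= - c by move=> p /=; rewrite lerN2.
have Hyy : forall n, y n = y' n + fact_f d gamma (fun p => - h p) n.
  by move=> n; rewrite fact_f_neg Hy' addrK.
have Hex : exists p, (fun p => - h p) p = - c by exists p0; rewrite /= hp0.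
have [_ P2] := @level_max d gamma y' y (fun p => - h p) (- c) Ry' Hyy Hlt hM Hex Hpos.
split; last first.
  move=> K HK; apply: (P2 K) => q /= /eqP; rewrite eqr_opp => /eqP; exact: HK.
move=> n hn.
have G := @fact_f_ge d gamma (fun p => - h p) (- c) n hM.
rewrite /= hn subrr mulr0 addr0 fact_f_neg in G.
have E : count (fun q => - h q != - c) (nbrs n) = count (fun q => h q != c) (nbrs n).
  by apply: eq_count => q; rewrite eqr_opp.
rewrite E in G.
have C := cnt_split (fun q => h q == c) (nbrs n); rewrite size_nbrs in C.
case: Ry' => /(_ n) [L _] _; rewrite Hy' in L.
rewrite /NP; move: G C L Hpos.
set c1 := count _ _; set c2 := count _ _; set F := fact_f _ _ _ _.
clearbody c1 c2 F; move=> G C L Hpos'. znia.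
Qed.
End Crit2.
Section Crit3.
Variables (d gamma : nat).
Implicit Types (n p q r : point d) (h : config d) (i j : 'I_d).

Lemma zero_fact h : (forall p, h p = 0) -> forall n, fact_f d gamma h n = 0.
Proof. by move=> H n; rewrite (fact_f_const _ _ H) mulr0. Qed.

Lemma critA (y : config d) (F NL : seq (point d)) : (2 * d < gamma)%N -> Rinf d gamma y ->
  (forall P : pred (point d), (exists q, P q /\ q \notin F) -> exists n, P n /\ (NP P n)%:Z <= y n) ->
  (forall P : pred (point d), (exists q, P q /\ q \notin NL) -> exists n, P n /\ y n + (NP P n)%:Z < gamma%:Z) ->
  forall h, bounded h -> Rinf d gamma (cadd y (fact_f d gamma h)) -> forall n, fact_f d gamma h n = 0.
Proof.
move=> hg Ry P1 P2 h hb Ry'.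
have Hy' : forall n, cadd y (fact_f d gamma h) n = y n + fact_f d gamma h n by [].
have Hlt' : forall n, cadd y (fact_f d gamma h) n < gamma%:Z by move=> n; case: Ry' => /(_ n) [].
have Hlt : forall n, y n < gamma%:Z by move=> n; case: Ry => /(_ n) [].
have [M [hM hMe]] := bmax hb.
have [c [hc hce]] := bmin hb.
have M0 : M <= 0.
  case: (lerP M 0) => // M1.
  have Hpos : 0 <= (gamma%:Z - (2 * d)%N%:Z) * (M - 1) by zconv; nia.
  have [p1 p2] := @level_max d gamma y _ h M Ry Hy' Hlt' hM hMe Hpos.
  case: (classic (exists q, (fun q => h q == M) q /\ q \notin F)) => [ex|nex].
    have [n [/eqP hn hn']] := P1 _ ex; have H := p1 n hn. exfalso; zlia.
  exfalso; apply: (p2 F) => q hq; apply/negPn/negP => hF; apply: nex; exists q; split=> //.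
  exact/eqP.
have c0 : 0 <= c.
  case: (lerP 0 c) => // c1.
  have Hpos : 0 <= (gamma%:Z - (2 * d)%N%:Z) * (- c - 1) by zconv; nia.
  have [p1 p2] := @level_min d gamma y _ h c Ry' Hy' Hlt hc hce Hpos.
  case: (classic (exists q, (fun q => h q == c) q /\ q \notin NL)) => [ex|nex].
    have [n [/eqP hn hn']] := P2 _ ex; have H := p1 n hn. exfalso; zlia.
  exfalso; apply: (p2 NL) => q hq; apply/negPn/negP => hF; apply: nex; exists q; split=> //.
  exact/eqP.
apply: zero_fact => p; have H1 := hM p; have H2 := hc p; zlia.
Qed.

Lemma critB (y : config d) (K : seq (point d)) : gamma = (2 * d)%N -> Rinf d gamma y ->
  (forall P : pred (point d), (exists a, P a /\ a \notin K) -> (exists b, ~~ P b /\ b \notin K) ->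
     exists n, P n /\ (NP P n)%:Z <= y n) ->
  forall h, bounded h -> Rinf d gamma (cadd y (fact_f d gamma h)) -> forall n, fact_f d gamma h n = 0.
Proof.
move=> hg Ry Pc h hb Ry'.
have Hy' : forall n, cadd y (fact_f d gamma h) n = y n + fact_f d gamma h n by [].
have Hlt' : forall n, cadd y (fact_f d gamma h) n < gamma%:Z by move=> n; case: Ry' => /(_ n) [].
have Hlt : forall n, y n < gamma%:Z by move=> n; case: Ry => /(_ n) [].
have [M [hM hMe]] := bmax hb.
have [c [hc hce]] := bmin hb.
case: (eqVneq c M) => [eMc|nMc].
  move=> n; rewrite (@fact_f_const d gamma h M); first by rewrite hg; zlia.
  by move=> p; apply/eqP; rewrite eq_le hM -eMc hc.
have Hpos : 0 <= (gamma%:Z - (2 * d)%N%:Z) * (M - 1) by rewrite hg subrr mul0r.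
have [p1 p2] := @level_max d gamma y _ h M Ry Hy' Hlt' hM hMe Hpos.
have Hpos' : 0 <= (gamma%:Z - (2 * d)%N%:Z) * (- c - 1) by rewrite hg subrr mul0r.
have [q1 q2] := @level_min d gamma y _ h c Ry' Hy' Hlt hc hce Hpos'.
have exa : exists a, (fun q => h q == M) a /\ a \notin K.
  apply: NNPP => nex; apply: (p2 K) => q hq; apply/negPn/negP => hF; apply: nex; exists q; split=> //.
  exact/eqP.
have exb : exists b, ~~ (fun q => h q == M) b /\ b \notin K.
  apply: NNPP => nex; apply: (q2 K) => q hq; apply/negPn/negP => hF; apply: nex; exists q; split=> //.
  by rewrite /= hq.
have [n [/eqP hn hn']] := Pc _ exa exb; have H := p1 n hn. exfalso; zlia.
Qed.
End Crit3.

Set Implicit Arguments. Unset Strict Implicit. Unset Printing Implicit Defensive.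
Import Order.TTheory GRing.Theory Num.Theory.
Local Open Scope ring_scope.

Lemma odd_abs_succ (z : int) : odd (absz (z + 1)) = ~~ odd (absz z).
Proof.
case: z => n.
  by rewrite -[Posz n + 1]/(Posz (n + 1)%N) /= addn1.
case: n => [//|n].
have -> : Negz n.+1 + 1 = - (n.+1)%:Z by zlia.
by rewrite abszN /= negbK.
Qed.

Section Par.
Variable d : nat.
Implicit Types (n p q r : point d) (h : config d) (i j : 'I_d).

Definition evenp q := ~~ odd (absz (\sum_j q j)).

Lemma sum_unitv i : \sum_j unitv i j = 1.
Proof.
rewrite (bigD1 i) //= unitvE eqxx big1 ?addr0 // => j ji.
by rewrite unitvE eq_sym (negbTE ji).
Qed.

Lemma sum_padd q i : \sum_j padd q (unitv i) j = \sum_j q j + 1.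
Proof. by rewrite (eq_bigr (fun j => q j + unitv i j)) ?big_split ?sum_unitv // => j _; rewrite paddE. Qed.

Lemma sum_psub q i : \sum_j psub q (unitv i) j = \sum_j q j - 1.
Proof. by rewrite (eq_bigr (fun j => q j - unitv i j)) ?big_split ?sumrN ?sum_unitv // => j _; rewrite psubE. Qed.

Lemma evenp_nbr q r : r \in nbrs q -> evenp r = ~~ evenp q.
Proof.
rewrite mem_nbrs /evenp => /existsP[i /orP[]/eqP->].
  by rewrite sum_padd odd_abs_succ.
by rewrite sum_psub -[in RHS](subrK 1 (\sum_j q j)) odd_abs_succ negbK.
Qed.

Lemma mem_flat_nbrs (L : seq (point d)) q :
  (q \in flatten [seq nbrs p | p <- L]) = has (fun p => q \in nbrs p) L.
Proof.
apply/flattenP/hasP.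
  by case=> s /mapP[p pL ->] qs; exists p.
by case=> p pL qp; exists (nbrs p) => //; apply/mapP; exists p.
Qed.

Lemma count_le_size (P : pred (point d)) n : (NP P n <= 2 * d)%N.
Proof. by rewrite /NP -(size_nbrs n) count_size. Qed.

End Par.

Section Y1.
Variables (d gamma : nat) (x0 : config d) (F : seq (point d)).
Implicit Types (n p q r : point d).

Definition adjF q := has (fun r => r \in F) (nbrs q).

Definition Y1 q : int := if q \in F then x0 q else if adjF q || evenp q then (gamma%:Z - 1) else 0.

Definition NL := F ++ flatten [seq nbrs p | p <- F] ++
  flatten [seq nbrs p | p <- flatten [seq nbrs p | p <- F]].

Lemma Y1_zero q : q \notin F -> ~~ adjF q -> ~~ evenp q -> Y1 q = 0.
Proof. by rewrite /Y1 => /negbTE -> /negbTE -> /negbTE ->. Qed.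

Lemma Y1_top q : q \notin F -> adjF q || evenp q -> Y1 q = gamma%:Z - 1.
Proof. by rewrite /Y1 => /negbTE -> ->. Qed.

Lemma NP0 (P : pred (point d)) q : ~~ has P (nbrs q) -> NP P q = 0%N.
Proof. by rewrite has_count -leqNgt leqn0 => /eqP. Qed.

Lemma Y1_P1 (hg : (2 * d < gamma)%N) (P : pred (point d)) : (exists q, P q /\ q \notin F) -> exists n, P n /\ (NP P n)%:Z <= Y1 n.
Proof.
case=> q [Pq qF].
case E: (adjF q || evenp q).
  exists q; split=> //; rewrite Y1_top //; have HH := count_le_size P q; zlia.
move/negbT: E; rewrite negb_or => /andP[nadj nev].
case H: (has P (nbrs q)).
  case/hasP: H => r rq Pr; exists r; split=> //.
  have rF : r \notin F by apply: contra nadj => rF; apply/hasP; exists r.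
  rewrite Y1_top //; first by have HH := count_le_size P r; zlia.
  by rewrite (evenp_nbr rq) nev orbT.
exists q; split=> //; rewrite Y1_zero // NP0 ?H //.
Qed.

Lemma notNL q : q \notin NL ->
  [/\ q \notin F, ~~ adjF q & forall r, r \in nbrs q -> r \notin F /\ ~~ adjF r].
Proof.
rewrite /NL !mem_cat !negb_or => /and3P[qF q1 q2]; split=> //.
- apply/hasP => [[r rq rF]]; move/negP: q1; apply; rewrite mem_flat_nbrs.
  by apply/hasP; exists r => //; apply: nbr_sym.
- move=> r rq; split.
    apply/negP => rF; move/negP: q1; apply; rewrite mem_flat_nbrs.
    by apply/hasP; exists r => //; apply: nbr_sym.
  apply/hasP => [[s sr sF]]; move/negP: q2; apply; rewrite mem_flat_nbrs.
  apply/hasP; exists r; last exact: nbr_sym.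
  rewrite mem_flat_nbrs; apply/hasP; exists s => //.
  exact: nbr_sym.
Qed.

Lemma Y1_P2 (hg : (2 * d < gamma)%N) (P : pred (point d)) : (exists q, P q /\ q \notin NL) ->
  exists n, P n /\ Y1 n + (NP P n)%:Z < gamma%:Z.
Proof.
case=> q [Pq /notNL[qF nadj Hr]].
case ev: (evenp q); last first.
  exists q; split=> //; rewrite Y1_zero ?ev //; have HH := count_le_size P q; zlia.
case H: (has P (nbrs q)).
  case/hasP: H => r rq Pr; exists r; split=> //.
  have [rF radj] := Hr r rq.
  rewrite Y1_zero //; first by have HH := count_le_size P r; zlia.
  by rewrite (evenp_nbr rq) ev.
exists q; split=> //; rewrite Y1_top ?ev ?orbT // NP0 ?H //; zlia.
Qed.

Lemma Y1_Rinf (hg : (2 * d < gamma)%N) (Rx : Rinf d gamma x0) : Rinf d gamma Y1.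
Proof.
case: Rx => Rr Rf; split.
  move=> q; rewrite /Y1; case: (q \in F); first exact: Rr.
  case: (_ || _); split; zlia.
move=> S S0.
case: (classic (exists q, (fun m => m \in S) q /\ q \notin F)) => [ex|nex].
  by have [n [nS H]] := Y1_P1 hg ex; exists n.
have [n nS H] := Rf S S0; exists n => //.
have nF : n \in F by apply/negPn/negP => nF; apply: nex; exists n.
by rewrite /Y1 nF.
Qed.

Lemma Y1_agree : agree_on F x0 Y1.
Proof. by move=> p pF; rewrite /Y1 pF. Qed.

End Y1.

Set Implicit Arguments. Unset Strict Implicit. Unset Printing Implicit Defensive.
Import Order.TTheory GRing.Theory Num.Theory.
Local Open Scope ring_scope.

Section Box.
Variable d : nat.
Implicit Types (n p q r : point d) (i j k : 'I_d).

Definition inbox (R : nat) q := [forall i, (absz (q i) <= R)%N].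

Definition boxl (R : nat) : seq (point d) :=
  [seq [ffun i => ((f i : nat)%:Z - R%:Z)] | f : {ffun 'I_d -> 'I_(2 * R)%N.+1} <- enum {ffun 'I_d -> 'I_(2 * R)%N.+1}].

Lemma mem_boxl R q : (q \in boxl R) = inbox R q.
Proof.
apply/idP/idP.
  case/mapP => f _ ->; apply/forallP => i; rewrite ffunE.
  have := ltn_ord (f i); move: (nat_of_ord (f i)) => x Hx.
  have H : (x <= 2 * R)%N by [].
  zlia.
move/forallP => H; apply/mapP.
have Hf : forall i, (absz (q i + R%:Z)%R < (2 * R).+1)%N.
    by move=> i; have := H i => Hi; zlia.
exists [ffun i => Ordinal (Hf i)]; first by rewrite mem_enum.
apply/ffunP => i; rewrite !ffunE /=.
have := H i => Hi.
have -> : (absz (q i + R%:Z))%:Z = q i + R%:Z by zlia.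
by rewrite addrK.
Qed.

Definition upd p k (t : int) : point d := [ffun j => if j == k then t else p j].

Definition psi q := (\sum_i absz (q i))%N.

Lemma abs_le_psi q i : (absz (q i) <= psi q)%N.
Proof. by rewrite /psi (bigD1 i) //= leq_addr. Qed.

Lemma psi_upd q i (t : int) : psi (upd q i t) = (absz t + \sum_(j | j != i) absz (q j))%N.
Proof.
rewrite /psi (bigD1 i) //= ffunE eqxx; congr addn.
by apply: eq_bigr => j ji; rewrite ffunE (negbTE ji).
Qed.

Lemma upd_eq q i : upd q i (q i) = q.
Proof. by apply/ffunP => j; rewrite ffunE; case: eqP => // ->. Qed.

Lemma padd_upd q i : padd q (unitv i) = upd q i (q i + 1).
Proof.
apply/ffunP => j; rewrite paddE unitvE ffunE.
by case: eqP => [->|/eqP ij]; rewrite ?eqxx // eq_sym (negbTE ij) addr0.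
Qed.

Lemma psub_upd q i : psub q (unitv i) = upd q i (q i - 1).
Proof.
apply/ffunP => j; rewrite psubE unitvE ffunE.
by case: eqP => [->|/eqP ij]; rewrite ?eqxx // eq_sym (negbTE ij) subr0.
Qed.

Lemma step_out q i : exists r, [/\ r \in nbrs q, absz (r i) = (absz (q i)).+1 & psi r = (psi q).+1].
Proof.
have Hq : psi q = (absz (q i) + \sum_(j | j != i) absz (q j))%N by rewrite -psi_upd upd_eq.
case: (lerP 0 (q i)) => H.
  exists (padd q (unitv i)); rewrite nbrs_padd padd_upd psi_upd Hq ffunE eqxx.
  have E : absz (q i + 1) = (absz (q i)).+1 by zlia.
  by rewrite E.
exists (psub q (unitv i)); rewrite nbrs_psub psub_upd psi_upd Hq ffunE eqxx.
have E : absz (q i - 1) = (absz (q i)).+1 by zlia.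
by rewrite E.
Qed.

Lemma max_psi (T : seq (point d)) : T != [::] -> exists2 q, q \in T & forall p, p \in T -> (psi p <= psi q)%N.
Proof.
elim: T => [//|x T IH] _.
case: (eqVneq T [::]) => [->|T0].
  by exists x; rewrite ?inE // => p; rewrite inE => /eqP->.
have [q qT Hq] := IH T0.
case: (leqP (psi x) (psi q)) => H.
  exists q; first by rewrite inE qT orbT.
  by move=> p; rewrite inE => /orP[/eqP->|/Hq].
exists x; first by rewrite inE eqxx.
move=> p; rewrite inE => /orP[/eqP->//|/Hq Hp]; exact: leq_trans Hp (ltnW H).
Qed.

Lemma cnt_lt (P : pred (point d)) q r : r \in nbrs q -> ~~ P r -> (NP P q < 2 * d)%N.
Proof.
move=> rq Pr; have C := cnt_split P (nbrs q); rewrite size_nbrs in C.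
have : (0 < count (fun q => ~~ P q) (nbrs q))%N by rewrite -has_count; apply/hasP; exists r.
rewrite /NP; move: C; set c1 := count _ _; set c2 := count _ _; move=> C H; zlia.
Qed.

End Box.

Set Implicit Arguments. Unset Strict Implicit. Unset Printing Implicit Defensive.
Import Order.TTheory GRing.Theory Num.Theory.
Local Open Scope ring_scope.

Section Path.
Variables (d R : nat) (P : pred (point d)).
Implicit Types (a b n p q r : point d) (i j k : 'I_d).

Definition closedP := forall n, ~~ inbox R n -> P n -> forall r, r \in nbrs n -> P r.

Lemma upd_ne p k t i : i != k -> upd p k t i = p i.
Proof. by move=> ik; rewrite ffunE (negbTE ik). Qed.
Lemma upd_k p k t : upd p k t k = t.
Proof. by rewrite ffunE eqxx. Qed.
Lemma upd_upd p k s t : upd (upd p k s) k t = upd p k t.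
Proof. by apply/ffunP => j; rewrite !ffunE; case: eqP. Qed.

Lemma seg (Hc : closedP) p k i : i != k -> (R < absz (p i))%N -> P p -> forall t, P (upd p k t).
Proof.
move=> ik Hi Pp.
have out : forall t, ~~ inbox R (upd p k t).
  by move=> t; apply/forallPn; exists i; rewrite upd_ne // -ltnNge.
have up : forall j : nat, P (upd p k (p k + j%:Z)).
  elim=> [|j IH]; first by rewrite addr0 upd_eq.
  have := nbrs_padd (upd p k (p k + j%:Z)) k.
  rewrite padd_upd upd_k upd_upd => H.
  have E : p k + j%:Z + 1 = p k + j.+1%:Z by zlia.
  rewrite -E; exact: Hc (out _) IH _ H.
have down : forall j : nat, P (upd p k (p k - j%:Z)).
  elim=> [|j IH]; first by rewrite subr0 upd_eq.
  have := nbrs_psub (upd p k (p k - j%:Z)) k.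
  rewrite psub_upd upd_k upd_upd => H.
  have E : p k - j%:Z - 1 = p k - j.+1%:Z by zlia.
  rewrite -E; exact: Hc (out _) IH _ H.
move=> t; case E: (t - p k) => [j|j].
  have -> : t = p k + j%:Z by zlia.
  exact: up.
have -> : t = p k - j.+1%:Z by zlia.
exact: down.
Qed.

Lemma reach (Hc : closedP) p j b : P p -> (R < absz (p j))%N -> p j = b j -> P b.
Proof.
move=> Pp Hj Ej.
have gen : forall s : seq 'I_d, j \notin s -> P [ffun k => if k \in s then b k else p k].
  elim=> [|x s IH] /=.
    move=> _; have -> : [ffun k => if k \in [::] then b k else p k] = p by apply/ffunP => k; rewrite ffunE.
    exact: Pp.
  rewrite inE negb_or => /andP[jx js].
  have -> : [ffun k => if k \in x :: s then b k else p k] =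
            upd [ffun k => if k \in s then b k else p k] x (b x).
    apply/ffunP => k; rewrite !ffunE inE; case: eqP => [->|_] //=.
  apply: (@seg Hc _ x j) => //; last exact: IH.
  by rewrite ffunE (negbTE js).
have := gen [seq k <- enum 'I_d | k != j]; rewrite mem_filter eqxx /= => /(_ isT).
suff -> : [ffun k => if k \in [seq k <- enum 'I_d | k != j] then b k else p k] = b by [].
apply/ffunP => k; rewrite ffunE mem_filter mem_enum andbT.
by case: eqP => [->|].
Qed.

Lemma other_idx (hd : (2 <= d)%N) (i : 'I_d) : exists k : 'I_d, k != i.
Proof.
have h0 : (0 < d)%N by apply: leq_trans hd.
case: i => [[|k] Hk].
  by exists (Ordinal hd); apply/eqP => /(congr1 val).
by exists (Ordinal h0); apply/eqP => /(congr1 val).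
Qed.

Lemma path_exit (hd : (2 <= d)%N) a b : ~~ inbox R a -> P a -> ~~ inbox R b -> ~~ P b ->
  exists n, [/\ ~~ inbox R n, P n & exists r, r \in nbrs n /\ ~~ P r].
Proof.
move=> ia Pa ib Pb; apply: NNPP => nex.
have Hc : closedP.
  move=> n nb Pn r rn; apply/negPn/negP => Pr; apply: nex; exists n; split=> //; by exists r.
move/forallPn: ia => [i]; rewrite -ltnNge => Hi.
move/forallPn: ib => [j]; rewrite -ltnNge => Hj.
case: (eqVneq i j) => [eij|nij].
  subst j; have [k ki] := other_idx hd i.
  have P1 : P (upd a k (R.+1)%:Z) by apply: (@seg Hc a k i) => //; rewrite eq_sym.
  have P2 : P (upd (upd a k (R.+1)%:Z) i (b i)).
    by apply: (@seg Hc _ i k) => //; rewrite upd_k.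
  move/negP: Pb; apply; apply: (@reach Hc _ i b P2); rewrite upd_k //.
have P1 : P (upd a j (b j)) by apply: (@seg Hc a j i).
move/negP: Pb; apply; apply: (@reach Hc _ j b P1); rewrite upd_k //.
Qed.

End Path.

Section Y2.
Variables (d gamma : nat) (x0 : config d) (R : nat).
Implicit Types (a b n p q r : point d).

Definition Y2 q : int := if inbox R q then x0 q else gamma%:Z - 1.

Lemma Y2_Rinf (hg : gamma = (2 * d)%N) (hd : (2 <= d)%N) (Rx : Rinf d gamma x0) : Rinf d gamma Y2.
Proof.
case: Rx => Rr Rf; split.
  move=> q; rewrite /Y2; case: (inbox R q); first exact: Rr.
  rewrite hg; split; zlia.
move=> S S0.
case: (boolP (all (inbox R) S)) => [/allP aS|].
  have [n nS H] := Rf S S0; exists n => //; by rewrite /Y2 aS.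
case/allPn => q0 q0S q0b.
set T := [seq q <- S | ~~ inbox R q].
have T0 : T != [::].
  apply/eqP => E; have : q0 \in T by rewrite mem_filter q0b.
  by rewrite E.
have [q qT Hq] := max_psi T0.
move: qT; rewrite mem_filter => /andP[qb qS].
exists q => //.
have [i Hi] : exists i, (R < absz (q i))%N.
  by move/forallPn: qb => [i]; rewrite -ltnNge => Hi; exists i.
have [r [rq ri rpsi]] := step_out q i.
have rb : ~~ inbox R r by apply/forallPn; exists i; rewrite -ltnNge ri ltnS ltnW.
have rS : r \notin S.
  apply/negP => rS; have : r \in T by rewrite mem_filter rb.
  by move/Hq; rewrite rpsi ltnn.
have H := @cnt_lt d (fun m => m \in S) q r rq rS.
rewrite /Y2 (negbTE qb) hg /NF; rewrite /NP in H; move: H; set c := count _ _ => H; zlia.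
Qed.

Lemma Y2_conn (hg : gamma = (2 * d)%N) (hd : (2 <= d)%N) (P : pred (point d)) :
  (exists a, P a /\ a \notin boxl d R) -> (exists b, ~~ P b /\ b \notin boxl d R) ->
  exists n, P n /\ (NP P n)%:Z <= Y2 n.
Proof.
case=> a [Pa]; rewrite mem_boxl => ab; case=> b [Pb]; rewrite mem_boxl => bb.
have [n [nb Pn [r [rn Pr]]]] := path_exit hd ab Pa bb Pb.
exists n; split=> //; have H := cnt_lt rn Pr.
rewrite /Y2 (negbTE nb) hg; zlia.
Qed.

Lemma Y2_agree (F : seq (point d)) : (forall p, p \in F -> inbox R p) -> agree_on F x0 Y2.
Proof. by move=> H p pF; rewrite /Y2 H. Qed.

End Y2.

Definition Rof d (F : seq (point d)) := (\sum_(q <- F) psi q)%N.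

Lemma inbox_Rof d (F : seq (point d)) q : q \in F -> inbox (Rof F) q.
Proof.
move=> qF; apply/forallP => i; apply: leq_trans (abs_le_psi q i) _.
by rewrite /Rof (big_rem q qF) /= leq_addr.
Qed.

Set Implicit Arguments. Unset Strict Implicit. Unset Printing Implicit Defensive.
Import Order.TTheory GRing.Theory Num.Theory.
Local Open Scope ring_scope.

Section Compact.
Variables (d gamma : nat) (x : config d) (k : nat).
Implicit Types (n p q r : point d) (h : config d) (G L S : seq (point d)) (c : seq int).

Definition Wk (v : config d) := exists h, (forall p, `|h p| <= k%:Z) /\
  (exists n, (pickle n < k)%N /\ fact_f d gamma h n != 0) /\ Rinf d gamma (cadd v (fact_f d gamma h)).

Definition Qc G h := [/\ (forall p, `|h p| <= k%:Z),
  (exists n, (pickle n < k)%N /\ fact_f d gamma h n != 0),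
  (forall n, n \in G -> 0 <= x n + fact_f d gamma h n /\ x n + fact_f d gamma h n < gamma%:Z) &
  (forall S, S <> [::] -> {subset S <= G} -> exists2 n, n \in S & (NF S n)%:Z <= x n + fact_f d gamma h n)].

Lemma Qc_mono G G' h : {subset G <= G'} -> Qc G' h -> Qc G h.
Proof.
move=> sub [H1 H2 H3 H4]; split=> //.
  by move=> n nG; apply: H3; apply: sub.
move=> S S0 sS; apply: H4 => // q qS; apply: sub; exact: sS.
Qed.

Definition agr c h := forall p, (pickle p < size c)%N -> h p = nth 0 c (pickle p).
Definition ext c := forall G, exists h, Qc G h /\ agr c h.

Definition vals := [seq Posz i | i <- iota 0 k.+1] ++ [seq Negz i | i <- iota 0 k].

Lemma mem_vals (a : int) : `|a| <= k%:Z -> a \in vals.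
Proof.
move=> H; rewrite mem_cat; case: a H => n H; apply/orP; [left|right]; apply/mapP; exists n => //;
  rewrite mem_iota /=; zlia.
Qed.

Lemma ext_step c : ext c -> exists a, ext (rcons c a).
Proof.
move=> Ec; apply: NNPP => nex.
have HG : forall l : seq int, exists G, forall a, a \in l -> forall h, Qc G h -> ~ agr (rcons c a) h.
  elim=> [|a l [G HG]]; first by exists [::].
  have : ~ ext (rcons c a) by move=> E; apply: nex; exists a.
  move/not_all_ex_not => [Ga HGa].
  exists (Ga ++ G) => b bin h hQ hA.
  rewrite inE in bin; case/orP: bin => [/eqP Eb|bl].
    subst b; apply: HGa; exists h; split=> //; apply: Qc_mono hQ => q qG; by rewrite mem_cat qG.
  apply: (HG b bl h) => //; apply: Qc_mono hQ => q qG; by rewrite mem_cat qG orbT.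
have [G HG'] := HG vals.
have [h [hQ hA]] := Ec G.
pose a := if unpickle (size c) is Some p then h p else 0.
apply: (HG' a _ h hQ).
  rewrite /a; case: (unpickle (size c)) => [p|]; apply: mem_vals; last by rewrite normr0.
  by case: hQ.
move=> p; rewrite size_rcons ltnS leq_eqVlt => /orP[/eqP E|lt].
  rewrite nth_rcons E ltnn eqxx /a -E pickleK //.
by rewrite nth_rcons lt; apply: hA.
Qed.

Lemma fact_f_loc h h' n : (forall q, q \in n :: nbrs n -> h q = h' q) -> fact_f d gamma h n = fact_f d gamma h' n.
Proof.
move=> H; rewrite /fact_f H ?inE ?eqxx //; congr (_ - _); apply: eq_bigr => i _.
by rewrite !H // inE ?nbrs_padd ?nbrs_psub orbT.
Qed.

Definition flatn S := flatten [seq q :: nbrs q | q <- S].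

Lemma mem_flatn S q r : q \in S -> r \in q :: nbrs q -> r \in flatn S.
Proof. by move=> qS rq; apply/flattenP; exists (q :: nbrs q) => //; apply/mapP; exists q. Qed.

Lemma compact : (forall G, exists h, Qc G h) ->
  exists h, [/\ (forall p, `|h p| <= k%:Z), (exists n, (pickle n < k)%N /\ fact_f d gamma h n != 0)
      & Rinf d gamma (cadd x (fact_f d gamma h))].
Proof.
move=> H0.
have ch : forall c, exists a, ext c -> ext (rcons c a).
  move=> c; case: (classic (ext c)) => E; last by exists 0.
  by have [a Ha] := ext_step E; exists a.
pose next c := proj1_sig (constructive_indefinite_description _ (ch c)).
have nextP : forall c, ext c -> ext (rcons c (next c)).
  by move=> c; rewrite /next; case: (constructive_indefinite_description _ _).
pose cs := fix cs j := if j is j'.+1 then rcons (cs j') (next (cs j')) else [::].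
have sz : forall j, size (cs j) = j by elim=> //= j IH; rewrite size_rcons IH.
have ecs : forall j, ext (cs j).
  elim=> [|j IH] /=; last exact: nextP.
  by move=> G; have [h hQ] := H0 G; exists h; split=> // p.
have stab : forall j i, (i < j)%N -> nth 0 (cs j) i = nth 0 (cs i.+1) i.
  elim=> // j IH i; rewrite ltnS leq_eqVlt => /orP[/eqP->//|lt] /=.
  by rewrite nth_rcons sz lt IH.
pose hl p := nth 0 (cs (pickle p).+1) (pickle p).
have approx : forall G L, exists h, Qc G h /\ forall p, p \in L -> h p = hl p.
  move=> G L; pose J := (\sum_(p <- L) pickle p).+1%N.
  have [h [hQ hA]] := ecs J G; exists h; split=> // p pL.
  have lt : (pickle p < J)%N by rewrite ltnS /J (big_rem p pL) /= leq_addr.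
  by rewrite hA ?sz // stab.
exists hl; split.
- move=> p; have [h [[H1 _ _ _] HA]] := approx [::] [:: p].
  by rewrite -HA ?inE ?eqxx.
- pose Lk := [seq q <- pmap unpickle (iota 0 k) | true].
  have [h [[_ [n [nk nz]] _ _] HA]] := approx [::] (flatn (pmap unpickle (iota 0 k))).
  exists n; split=> //; rewrite -(@fact_f_loc h) // => q qn; apply: HA; apply: mem_flatn qn.
  rewrite mem_pmap; apply/mapP; exists (pickle n); rewrite ?pickleK // mem_iota.
  by rewrite add0n.
- split.
    move=> n; have [h [[_ _ H3 _] HA]] := approx [:: n] (flatn [:: n]).
    rewrite /cadd -(@fact_f_loc h); first by apply: H3; rewrite inE.
    by move=> q qn; apply: HA; apply: mem_flatn qn; rewrite inE.
  move=> S S0; have [h [[_ _ _ H4] HA]] := approx S (flatn S).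
  have [n nS Hn] := H4 S S0 (fun q qS => qS); exists n => //.
  rewrite /cadd -(@fact_f_loc h) //.
  by move=> q qn; apply: HA; apply: mem_flatn qn.
Qed.

End Compact.

Set Implicit Arguments. Unset Strict Implicit. Unset Printing Implicit Defensive.
Import Order.TTheory GRing.Theory Num.Theory.
Local Open Scope ring_scope.

Lemma dense_part (d gamma : nat) (hd : (2 <= d)%N) (hg : (2 * d <= gamma)%N) :
  dense_in (Rinf d gamma) (Vset d gamma).
Proof.
move=> U Uo [x [Rx Ux]].
have [F HF] := Uo x Rx Ux.
case: (ltnP (2 * d) gamma) => [lt|ge].
  exists (Y1 gamma x F).
  have Ry := @Y1_Rinf d gamma x F lt Rx.
  split=> //; first exact: HF (@Y1_agree d gamma x F).
  split=> // h hb [n nz] Ry'.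
  have := @critA d gamma (Y1 gamma x F) F (NL F) lt Ry (@Y1_P1 d gamma x F lt) (@Y1_P2 d gamma x F lt) h hb Ry' n.
  by move/eqP; rewrite (negbTE nz).
have eg : gamma = (2 * d)%N by apply/eqP; rewrite eqn_leq hg ge.
exists (Y2 gamma x (Rof F)).
have Ry := @Y2_Rinf d gamma x (Rof F) eg hd Rx.
split=> //; first by apply: HF => //; apply: (@Y2_agree d gamma x (Rof F) F) => p pF; exact: inbox_Rof.
split=> // h hb [n nz] Ry'.
have := @critB d gamma (Y2 gamma x (Rof F)) (boxl d (Rof F)) eg Ry (@Y2_conn d gamma x (Rof F) eg hd) h hb Ry' n.
by move/eqP; rewrite (negbTE nz).
Qed.

Lemma gdelta_part (d gamma : nat) : Gdelta_in (Rinf d gamma) (Vset d gamma).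
Proof.
exists (fun k x => exists G : seq (point d), forall y, Rinf d gamma y -> agree_on G x y -> ~ Wk gamma k y).
split.
  move=> k x Rx [G HG]; exists G => y Ry Ag; exists G => z Rz Agz; apply: HG => // p pG.
  by rewrite (Agz p pG) (Ag p pG).
move=> x Rx; split.
  move=> [_ Vx] k; apply: NNPP => nU.
  have H0 : forall G, exists h, Qc gamma x k G h.
    move=> G; apply: NNPP => nh; apply: nU; exists G => y Ry Ag [h [h1 [h2 h3]]].
    apply: nh; exists h; split=> //.
      by move=> n nG; case: h3 => /(_ n) []; rewrite /cadd (Ag n nG).
    move=> S S0 sS; case: h3 => _ /(_ S S0) [n nS Hn]; exists n => //.
    by rewrite -(Ag n (sS n nS)).
  have [h [h1 [n [_ nz]] h3]] := compact H0.
  by apply: (Vx h _ (ex_intro _ n nz) h3); exists k%:Z.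
move=> HU; split=> // h [B hB] [n nz] Ry'.
have [G HG] := HU (absz B + pickle n).+1%N.
apply: (HG x Rx (fun _ _ => erefl)); exists h; split.
  move=> p; have H := hB p; zlia.
split=> //; exists n; split=> //; rewrite ltnS leq_addl //.
Qed.

Theorem proposition4p4 (d gamma : nat) (hd : (2 <= d)%N) (hg : (2 * d <= gamma)%N) :
  (forall v, Vset d gamma v -> Rinf d gamma v) /\
  dense_in (Rinf d gamma) (Vset d gamma) /\
  Gdelta_in (Rinf d gamma) (Vset d gamma).
Proof.
split; first by move=> v [].
split; [exact: dense_part | exact: gdelta_part].
Qed.
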